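(* Let $R$ be a local ring. Let $\mathcal{A}$ be a finite $R$-Hopf algebra and let $S$ be a faithful left $\mathcal{A}$-module algebra which is a finite $R$-algebra with $\mathrm{rank}_R(S)=\mathrm{rank}_R(\mathcal{A})$, and assume $S^{\mathcal{A}}=R$. Then $S$ is a tame $\mathcal{A}$-extension of $R$ if and only if there exists a left $\mathcal{A}$-module homomorphism $g:\mathcal{A}^\ast\to S$ with $g(1)=1$. Moreover, if $R$ is a field and $S$ is a tame $\mathcal{A}$-extension of $R$, then every right relative $(S,\mathcal{A}^\ast)$-Hopf module is an injective $\mathcal{A}^\ast$-comodule.
   Context: A finite $R$-algebra (resp. finite $R$-Hopf algebra) is one that is finitely generated projective as an $R$-module. $\mathcal{A}^\ast=\mathrm{Hom}_R(\mathcal{A},R)$ is the dual Hopf algebra, with its usual left $\mathcal{A}$-module structure $(a\cdot f)(b)=f(ba)$; its unit $1$ is the counit $\varepsilon$ of $\mathcal{A}$. For a left $\mathcal{A}$-module $V$, $V^{\mathcal{A}}=\{v\in V: av=\varepsilon(a)v \text{ for all } a\in\mathcal{A}\}$. The set of left integrals of $\mathcal{A}$ is $I=\mathcal{A}^{\mathcal{A}}=\{\lambda\in\mathcal{A}: a\lambda=\varepsilon(a)\lambda\ \forall a\}$, and $IS$ denotes the $R$-submodule of $S$ generated by the elements $\lambda s$, $\lambda\in I$, $s\in S$. $S$ is a faithful $\mathcal{A}$-module if $as=0$ for all $s\in S$ implies $a=0$. $S$ is a tame $\mathcal{A}$-extension of $R$ if $S$ is a finite $R$-algebra and left $\mathcal{A}$-module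 algebra with $S^{\mathcal{A}}=R$, $\mathrm{rank}_R(\mathcal{A})=\mathrm{rank}_R(S)$, $S$ is a faithful $\mathcal{A}$-module, and $IS=R$. Since $\mathcal{A}$ is finite, the left $\mathcal{A}$-module algebra structure on $S$ corresponds to a right $\mathcal{A}^\ast$-comodule algebra structure on $S$; a right relative $(S,\mathcal{A}^\ast)$-Hopf module is a right $S$-module $M$ with a right $\mathcal{A}^\ast$-comodule structure $m\mapsto m_{(0)}\otimes m_{(1)}$ such that $(ms)_{(0)}\otimes(ms)_{(1)}=m_{(0)}s_{(0)}\otimes m_{(1)}s_{(1)}$. *)

(* Defs.v *)
(* Finite (= finitely generated projective) modules over a
   local ring are free, so finite Hopf algebras / algebras are presented by
   structure constants w.r.t. a basis. *)
From HB Require Import structures.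
From mathcomp Require Import all_boot all_order all_algebra.
Set Implicit Arguments. Unset Strict Implicit. Unset Printing Implicit Defensive.
Import GRing.Theory.
Local Open Scope ring_scope.

(* R is local: nonzero (built into comUnitRingType) and non-units form an ideal *)
Definition local_ring (R : comUnitRingType) : Prop :=
  forall x y : R, x \isn't a GRing.unit -> y \isn't a GRing.unit ->
    x + y \isn't a GRing.unit.

(* A finite R-Hopf algebra of rank n, by structure constants on the basis
   e_0..e_{n-1}:  e_i e_j = sum_k hmul i j k e_k,  1 = sum_k hunit k e_k,
   Delta e_k = sum_{i,j} hcomul k i j e_i (x) e_j,  eps e_k = hcounit k,
   S e_i = sum_j hanti i j e_j. *)
Record hopf_consts (R : comUnitRingType) (n : nat) := HopfConsts {
  hmul : 'I_n -> 'I_n -> 'I_n -> R;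
  hunit : 'I_n -> R;
  hcomul : 'I_n -> 'I_n -> 'I_n -> R;
  hcounit : 'I_n -> R;
  hanti : 'I_n -> 'I_n -> R }.

(* An R-algebra S of rank m (structure constants) with an action of A:
   e_i . s_j = sum_k sact i j k s_k. *)
Record modalg_consts (R : comUnitRingType) (n m : nat) := ModAlgConsts {
  smul : 'I_m -> 'I_m -> 'I_m -> R;
  sunit : 'I_m -> R;
  sact : 'I_n -> 'I_m -> 'I_m -> R }.

Section Hopf.
Variables (R : comUnitRingType) (n : nat) (H : hopf_consts R n).

(* elements of A are coordinate rows; elements of A (x) A are n x n matrices *)
Definition Abasis (i : 'I_n) : 'rV[R]_n := delta_mx 0 i.
Definition Amul (a b : 'rV[R]_n) : 'rV[R]_n :=
  \row_k \sum_(i < n) \sum_(j < n) a 0 i * b 0 j * hmul H i j k.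
Definition Aone : 'rV[R]_n := \row_k hunit H k.
Definition Acomul (a : 'rV[R]_n) : 'M[R]_n :=
  \matrix_(i, j) \sum_(k < n) a 0 k * hcomul H k i j.
Definition Acounit (a : 'rV[R]_n) : R := \sum_(k < n) a 0 k * hcounit H k.
Definition Aanti (a : 'rV[R]_n) : 'rV[R]_n :=
  \row_j \sum_(i < n) a 0 i * hanti H i j.
Definition tmul (M N : 'M[R]_n) : 'M[R]_n :=
  \matrix_(p, q) \sum_(i < n) \sum_(j < n) \sum_(k < n) \sum_(l < n)
     M i j * N k l * hmul H i k p * hmul H j l q.

Definition is_hopf : Prop :=
  [/\ (forall a b c, Amul (Amul a b) c = Amul a (Amul b c)) /\
      (forall a, Amul Aone a = a /\ Amul a Aone = a),
      (forall a i j l, \sum_(k < n) Acomul a k l * hcomul H k i j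
                     = \sum_(k < n) Acomul a i k * hcomul H k j l),
      (forall a, (\row_j \sum_(i < n) Acomul a i j * hcounit H i) = a /\
                 (\row_i \sum_(j < n) Acomul a i j * hcounit H j) = a),
      [/\ (forall a b, Acomul (Amul a b) = tmul (Acomul a) (Acomul b)),
          Acomul Aone = \matrix_(i, j) (hunit H i * hunit H j),
          (forall a b, Acounit (Amul a b) = Acounit a * Acounit b) &
          Acounit Aone = 1] &
      (forall a,
        \sum_(i < n) \sum_(j < n) Acomul a i j *: Amul (Aanti (Abasis i)) (Abasis j)
          = Acounit a *: Aone /\
        \sum_(i < n) \sum_(j < n) Acomul a i j *: Amul (Abasis i) (Aanti (Abasis j))
          = Acounit a *: Aone)].

Definition left_integral (l : 'rV[R]_n) : Prop :=
  forall a, Amul a l = Acounit a *: l.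

(* dual A^* : rows f with f(a) = sum_i f_i a_i; unit of A^* is eps *)
Definition dual_one : 'rV[R]_n := \row_k hcounit H k.
(* (a . f)(b) = f (b a) *)
Definition dual_act (a f : 'rV[R]_n) : 'rV[R]_n :=
  \row_j \sum_(i < n) f 0 i * (Amul (Abasis j) a) 0 i.

(* right A^* -comodules: rho m = sum_i (rho m i) (x) e_i^*  (e^* dual basis) *)
Definition is_comodule (M : lmodType R) (rho : M -> 'I_n -> M) : Prop :=
  [/\ (forall (r : R) (x y : M) i, rho (r *: x + y) i = r *: rho x i + rho y i),
      (* (rho (x) 1) rho = (1 (x) Delta_{A^*}) rho *)
      (forall x i j, rho (rho x j) i = \sum_(k < n) hmul H i j k *: rho x k) &
      (* (1 (x) eps_{A^*}) rho = id *)
      (forall x, \sum_(i < n) hunit H i *: rho x i = x)].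

Definition comod_hom (M N : lmodType R) (rhoM : M -> 'I_n -> M)
    (rhoN : N -> 'I_n -> N) (f : M -> N) : Prop :=
  (forall (r : R) x y, f (r *: x + y) = r *: f x + f y) /\
  (forall x i, rhoN (f x) i = f (rhoM x i)).

Definition injective_comodule (M : lmodType R) (rhoM : M -> 'I_n -> M) : Prop :=
  forall (N P : lmodType R) (rhoN : N -> 'I_n -> N) (rhoP : P -> 'I_n -> P)
         (i : N -> P) (f : N -> M),
    is_comodule rhoN -> is_comodule rhoP ->
    comod_hom rhoN rhoP i -> injective i -> comod_hom rhoN rhoM f ->
    exists h : P -> M, comod_hom rhoP rhoM h /\ (forall x, h (i x) = f x).

Section ModAlg.
Variables (m : nat) (S : modalg_consts R n m).

Definition Smul (s t : 'rV[R]_m) : 'rV[R]_m :=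
  \row_k \sum_(i < m) \sum_(j < m) s 0 i * t 0 j * smul S i j k.
Definition Sone : 'rV[R]_m := \row_k sunit S k.
Definition Aact (a : 'rV[R]_n) (s : 'rV[R]_m) : 'rV[R]_m :=
  \row_k \sum_(i < n) \sum_(j < m) a 0 i * s 0 j * sact S i j k.

Definition is_module_algebra : Prop :=
  [/\ (forall s t u, Smul (Smul s t) u = Smul s (Smul t u)) /\
      (forall s, Smul Sone s = s /\ Smul s Sone = s),
      (forall a b s, Aact (Amul a b) s = Aact a (Aact b s)),
      (forall s, Aact Aone s = s),
      (forall a s t, Aact a (Smul s t) =
         \sum_(i < n) \sum_(j < n) Acomul a i j *: Smul (Aact (Abasis i) s) (Aact (Abasis j) t)) &
      (forall a, Aact a Sone = Acounit a *: Sone)].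

Definition faithful_action : Prop :=
  forall a, (forall s, Aact a s = 0) -> a = 0.

Definition invariants_eq_R : Prop :=
  forall s, (forall a, Aact a s = Acounit a *: s) <-> exists r : R, s = r *: Sone.

Definition IS_eq_R : Prop :=
  forall x : 'rV[R]_m,
    (exists (k : nat) (l : 'I_k -> 'rV[R]_n) (s : 'I_k -> 'rV[R]_m),
        (forall i, left_integral (l i)) /\ x = \sum_(i < k) Aact (l i) (s i))
    <-> exists r : R, x = r *: Sone.

Definition tame : Prop :=
  [/\ is_module_algebra, m = n, invariants_eq_R, faithful_action & IS_eq_R].

Definition dual_module_hom (g : 'rV[R]_n -> 'rV[R]_m) : Prop :=
  (forall (r : R) f f', g (r *: f + f') = r *: g f + g f') /\
  (forall a f, g (dual_act a f) = Aact a (g f)).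

(* right relative (S, A^* )-Hopf modules; the right A^* -comodule algebra
   structure of S is rho_S(s) = sum_j (e_j . s) (x) e_j^*, and
   e_i^* e_j^* = sum_k hcomul k i j e_k^* in A^* *)
Definition rel_hopf_module (M : lmodType R) (sa : M -> 'rV[R]_m -> M)
    (rho : M -> 'I_n -> M) : Prop :=
  [/\ is_comodule rho /\
      (forall (r : R) x y s, sa (r *: x + y) s = r *: sa x s + sa y s),
      (forall (r : R) x s t, sa x (r *: s + t) = r *: sa x s + sa x t),
      (forall x s t, sa (sa x s) t = sa x (Smul s t)),
      (forall x, sa x Sone = x) &
      (forall x s k, rho (sa x s) k =
         \sum_(i < n) \sum_(j < n) hcomul H k i j *: sa (rho x i) (Aact (Abasis j) s))].

End ModAlg.
End Hopf.

(* Main.v *)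
Require Import Defs.
From HB Require Import structures.
From mathcomp Require Import all_boot all_order all_algebra.
From mathcomp Require Import ring.
From Stdlib Require Import Setoid Morphisms.
Set Implicit Arguments. Unset Strict Implicit. Unset Printing Implicit Defensive.
Import GRing.Theory.
Local Open Scope ring_scope.

#[export] Instance bigop_proper (R I : Type) (idx : R) (r : seq I) :
  Proper (pointwise_relation I eq ==> eq) (@bigop R I idx r).
Proof. move=> f g fg; rewrite unlock /reducebig; elim: r => //= x r ->; by rewrite fg. Qed.

Ltac sout := repeat (setoid_rewrite big_distrl || setoid_rewrite big_distrr); simpl.

Lemma xchg (V : nmodType) (I J : finType) (F : I -> J -> V) :
  \sum_i \sum_j F i j = \sum_j \sum_i F i j.
Proof. exact: exchange_big. Qed.

Ltac sfront k := lazymatch k with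
  | O => idtac
  | S O => rewrite xchg
  | S ?k' => under eq_bigr => ? _ do sfront k'; rewrite xchg
  end.

Ltac salign l := lazymatch l with
  | nil => idtac
  | cons ?k ?l' =>
     lazymatch goal with |- _ = ?B => let H := fresh "Hr" in set H := B; sfront k; rewrite {}/H end;
     apply: eq_bigr => ? _; salign l'
  end.

Lemma sum_delta (R : pzSemiRingType) (I : finType) (a : I) (F : I -> R) :
  \sum_i (a == i)%:R * F i = F a.
Proof.
rewrite (bigD1 a) //= eqxx mul1r big1 ?addr0 // => i /negbTE.
by rewrite eq_sym => ->; rewrite mul0r.
Qed.
Lemma sum_delta' (R : pzSemiRingType) (I : finType) (a : I) (F : I -> R) :
  \sum_i (i == a)%:R * F i = F a.
Proof. rewrite -(sum_delta a); apply: eq_bigr => i _; by rewrite eq_sym. Qed.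

Ltac sstep k := lazymatch goal with |- _ = ?B =>
  let H := fresh "Hr" in set H := B; sfront k; rewrite {}/H end; apply: eq_bigr => ? _.

Ltac sauto := first [ ring
  | sstep 0%N; sauto | sstep 1%N; sauto | sstep 2%N; sauto | sstep 3%N; sauto
  | sstep 4%N; sauto | sstep 5%N; sauto | sstep 6%N; sauto ].

Ltac sring := sout; sauto.

Lemma sum_pair (V : nmodType) (I J : finType) (F : I * J -> V) :
  \sum_p F p = \sum_i \sum_j F (i, j).
Proof. by rewrite pair_big; apply: eq_bigr => -[]. Qed.
Lemma sum_delta_r (R : comPzSemiRingType) (I : finType) (a : I) (F : I -> R) :
  \sum_i F i * (a == i)%:R = F a.
Proof. rewrite -(sum_delta a); apply: eq_bigr => i _; by rewrite mulrC. Qed.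
Lemma sum_delta_r' (R : comPzSemiRingType) (I : finType) (a : I) (F : I -> R) :
  \sum_i F i * (i == a)%:R = F a.
Proof. rewrite -(sum_delta' a); apply: eq_bigr => i _; by rewrite mulrC. Qed.
From HB Require Import structures.
From mathcomp Require Import all_boot all_order all_algebra.
From mathcomp Require Import ring.
From Stdlib Require Import Setoid Morphisms.
Set Implicit Arguments. Unset Strict Implicit. Unset Printing Implicit Defensive.
Import GRing.Theory.
Local Open Scope ring_scope.

Record HopfAx (R : comPzRingType) (n : nat) (mu : 'I_n -> 'I_n -> 'I_n -> R)
  (u : 'I_n -> R) (de : 'I_n -> 'I_n -> 'I_n -> R) (ep : 'I_n -> R)
  (si : 'I_n -> 'I_n -> R) : Prop := {
 h_assoc : forall i j k q, \sum_p mu i j p * mu p k q = \sum_p mu j k p * mu i p q;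
 h_unl : forall j k, \sum_i u i * mu i j k = (j == k)%:R;
 h_unr : forall i k, \sum_j u j * mu i j k = (i == k)%:R;
 h_coass : forall c x y z, \sum_k de c k z * de k x y = \sum_k de c x k * de k y z;
 h_counl : forall c y, \sum_x de c x y * ep x = (c == y)%:R;
 h_counr : forall c x, \sum_y de c x y * ep y = (c == x)%:R;
 h_comulm : forall a b p q, \sum_k mu a b k * de k p q =
     \sum_i \sum_j \sum_k \sum_l de a i j * de b k l * mu i k p * mu j l q;
 h_comul1 : forall i j, \sum_k u k * de k i j = u i * u j;
 h_counm : forall a b, \sum_k mu a b k * ep k = ep a * ep b;
 h_coun1 : \sum_k u k * ep k = 1;
 h_Sl : forall a q, \sum_i \sum_j de a i j * \sum_p si i p * mu p j q = ep a * u q;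
 h_Sr : forall a q, \sum_i \sum_j de a i j * \sum_p si j p * mu i p q = ep a * u q }.

Section Dual.
Variables (R : comPzRingType) (n : nat) (mu : 'I_n -> 'I_n -> 'I_n -> R)
  (u : 'I_n -> R) (de : 'I_n -> 'I_n -> 'I_n -> R) (ep : 'I_n -> R)
  (si : 'I_n -> 'I_n -> R).

Lemma HopfAx_dual : HopfAx mu u de ep si ->
  HopfAx (fun i j k => de k i j) ep (fun k i j => mu i j k) u (fun i j => si j i).
Proof.
case=> asc ul ur ca cl cr cm c1 em e1 sl sr; split.
- move=> i j k q. rewrite (eq_bigr (fun p => de q p k * de p i j)); last by move=> ? _; ring.
  rewrite ca; apply: eq_bigr => ? _; ring.
- move=> j k; rewrite eq_sym -cl; apply: eq_bigr => ? _; ring.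
- move=> j k; rewrite eq_sym -cr; apply: eq_bigr => ? _; ring.
- move=> c x y z. rewrite (eq_bigr (fun k => mu x y k * mu k z c)); last by move=> ? _; ring.
  rewrite asc; apply: eq_bigr => ? _; ring.
- move=> c y; rewrite eq_sym -ul; apply: eq_bigr => ? _; ring.
- move=> c x; rewrite eq_sym -ur; apply: eq_bigr => ? _; ring.
- move=> a b p q. rewrite (_ : \sum_k de k a b * mu p q k = \sum_k mu p q k * de k a b);
    last by apply: eq_bigr => ? _; ring.
  rewrite cm; salign [:: 0; 1; 0; 0]%N; ring.
- move=> i j; rewrite -em; apply: eq_bigr => ? _; ring.
- move=> a b; rewrite -c1; apply: eq_bigr => ? _; ring.
- rewrite -e1; apply: eq_bigr => ? _; ring.
- move=> a q; rewrite mulrC -sl; sout; salign [:: 2; 1; 0]%N; ring.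
- move=> a q; rewrite mulrC -sr; sout; salign [:: 0; 1; 0]%N; ring.
Qed.
End Dual.
From HB Require Import structures.
From mathcomp Require Import all_boot all_order all_algebra.
From mathcomp Require Import ring.
From Stdlib Require Import Setoid Morphisms.
Set Implicit Arguments. Unset Strict Implicit. Unset Printing Implicit Defensive.
Import GRing.Theory.
Local Open Scope ring_scope.

Section D1.
Variables (R : comPzRingType) (n : nat) (mu : 'I_n -> 'I_n -> 'I_n -> R)
  (u : 'I_n -> R) (de : 'I_n -> 'I_n -> 'I_n -> R) (ep : 'I_n -> R)
  (si : 'I_n -> 'I_n -> R).
Hypothesis hA : HopfAx mu u de ep si.

Lemma epS i : \sum_p si i p * ep p = ep i.
Proof.
symmetry.
transitivity (\sum_q (ep i * u q) * ep q).
  by rewrite -{1}(mulr1 (ep i)) -(h_coun1 hA) big_distrr /=; apply: eq_bigr => ? _; ring.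
transitivity (\sum_q (\sum_x \sum_y de i x y * \sum_p si x p * mu p y q) * ep q).
  by setoid_rewrite (h_Sl hA).
transitivity (\sum_x \sum_y \sum_p de i x y * si x p * (\sum_q mu p y q * ep q)).
  sring.
setoid_rewrite (h_counm hA).
transitivity (\sum_x (\sum_y de i x y * ep y) * (\sum_p si x p * ep p)); first by sring.
setoid_rewrite (h_counr hA); exact: sum_delta.
Qed.
End D1.
From HB Require Import structures.
From mathcomp Require Import all_boot all_order all_algebra.
From mathcomp Require Import ring.
From Stdlib Require Import Setoid Morphisms.
Set Implicit Arguments. Unset Strict Implicit. Unset Printing Implicit Defensive.
Import GRing.Theory.
Local Open Scope ring_scope.

Section Conv.
Variables (R : comPzRingType) (I J : finType) (d : I -> I -> I -> R) (e : I -> R)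
  (m : J -> J -> J -> R) (u : J -> R).
Hypothesis coass : forall c x y z, \sum_k d c k z * d k x y = \sum_k d c x k * d k y z.
Hypothesis counl : forall c y, \sum_x d c x y * e x = (c == y)%:R.
Hypothesis counr : forall c x, \sum_y d c x y * e y = (c == x)%:R.
Hypothesis assoc : forall i j k q, \sum_p m i j p * m p k q = \sum_p m j k p * m i p q.
Hypothesis unl : forall j k, \sum_i u i * m i j k = (j == k)%:R.
Hypothesis unr : forall i k, \sum_j u j * m i j k = (i == k)%:R.

Definition conv (F G : I -> J -> R) c q :=
  \sum_x \sum_y d c x y * \sum_a \sum_b F x a * G y b * m a b q.
Definition cE c q := e c * u q.

Lemma conv_assoc F G K c q : conv (conv F G) K c q = conv F (conv G K) c q.
Proof.
rewrite /conv.
transitivity (\sum_x' \sum_y' \sum_z \sum_a' \sum_b' \sum_b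
   (\sum_x d c x z * d x x' y') * (F x' a' * G y' b' * K z b) * (\sum_a m a' b' a * m a b q)).
  sout. salign [:: 4; 4; 1; 3; 3; 2; 0; 0]%N. ring.
transitivity (\sum_x' \sum_y' \sum_z \sum_a' \sum_b' \sum_b
   (\sum_x d c x' x * d x y' z) * (F x' a' * G y' b' * K z b) * (\sum_a m b' b a * m a' a q)).
  do 6 (apply: eq_bigr => ? _); by rewrite coass assoc.
sout. salign [:: 0; 5; 2; 4; 0; 0; 0; 0]%N. ring.
Qed.

Lemma conv_unitl F c q : conv cE F c q = F c q.
Proof.
rewrite /conv /cE.
transitivity (\sum_y (\sum_x d c x y * e x) * \sum_b F y b * \sum_a u a * m a b q); first by sring.
setoid_rewrite counl; setoid_rewrite unl.
rewrite sum_delta; under eq_bigr do rewrite mulrC; exact: sum_delta'.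
Qed.

Lemma conv_unitr F c q : conv F cE c q = F c q.
Proof.
rewrite /conv /cE.
transitivity (\sum_x (\sum_y d c x y * e y) * \sum_a F x a * \sum_b u b * m a b q); first by sring.
setoid_rewrite counr; setoid_rewrite unr.
rewrite sum_delta; under eq_bigr do rewrite mulrC; exact: sum_delta'.
Qed.

Lemma conv_ext F F' G G' c q : (forall x a, F x a = F' x a) -> (forall x a, G x a = G' x a) ->
  conv F G c q = conv F' G' c q.
Proof.
move=> hF hG; rewrite /conv; apply: eq_bigr => x _; apply: eq_bigr => y _.
congr (_ * _); apply: eq_bigr => a _; apply: eq_bigr => b _; by rewrite hF hG.
Qed.

Lemma inv_unique L F Rr : (forall c q, conv L F c q = cE c q) ->
  (forall c q, conv F Rr c q = cE c q) -> forall c q, L c q = Rr c q.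
Proof.
move=> h1 h2 c q.
rewrite -conv_unitr -(conv_unitl Rr) (@conv_ext L L (cE) (conv F Rr)) //.
by rewrite -conv_assoc; apply: conv_ext.
Qed.
End Conv.
From HB Require Import structures.
From mathcomp Require Import all_boot all_order all_algebra.
From mathcomp Require Import ring.
From Stdlib Require Import Setoid Morphisms.
Set Implicit Arguments. Unset Strict Implicit. Unset Printing Implicit Defensive.
Import GRing.Theory.
Local Open Scope ring_scope.

Section D2.
Variables (R : comPzRingType) (n : nat) (mu : 'I_n -> 'I_n -> 'I_n -> R)
  (u : 'I_n -> R) (de : 'I_n -> 'I_n -> 'I_n -> R) (ep : 'I_n -> R)
  (si : 'I_n -> 'I_n -> R).
Hypothesis hA : HopfAx mu u de ep si.

Let d2 (c x y : 'I_n * 'I_n) := de c.1 x.1 y.1 * de c.2 x.2 y.2.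
Let e2 (c : 'I_n * 'I_n) := ep c.1 * ep c.2.
Let L (c : 'I_n * 'I_n) q := \sum_p \sum_r si c.2 p * si c.1 r * mu p r q.
Let M (c : 'I_n * 'I_n) q := mu c.1 c.2 q.
Let Rr (c : 'I_n * 'I_n) q := \sum_k mu c.1 c.2 k * si k q.

Lemma LM c q : conv d2 mu L M c q = cE e2 u c q.
Proof.
case: c => a b; rewrite /conv /cE /d2 /e2 /L /M /=.
rewrite sum_pair; under eq_bigr => ? _ do under eq_bigr => ? _ do rewrite sum_pair; simpl.
transitivity (\sum_a1 \sum_a2 \sum_b1 \sum_b2 de a a1 a2 * de b b1 b2 * \sum_p \sum_r \sum_be
   si b1 p * si a1 r * mu a2 b2 be * (\sum_al mu p r al * mu al be q)).
  sout; salign [:: 0;1;0;0;2;2;1;0]%N; ring.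
setoid_rewrite (h_assoc hA).
transitivity (\sum_a1 \sum_a2 \sum_b1 \sum_b2 de a a1 a2 * de b b1 b2 * \sum_p \sum_r \sum_al
   si b1 p * si a1 r * mu p al q * (\sum_be mu a2 b2 be * mu r be al)).
  sout; salign [:: 0;0;0;0;0;0;1;0]%N; ring.
setoid_rewrite <- (h_assoc hA).
transitivity (\sum_b1 \sum_b2 de b b1 b2 * \sum_p si b1 p * \sum_al mu p al q *
   \sum_be (\sum_a1 \sum_a2 de a a1 a2 * \sum_r si a1 r * mu r a2 be) * mu be b2 al).
  sout; salign [:: 2;2;2;3;3;0;0;0]%N; ring.
setoid_rewrite (h_Sl hA).
transitivity (ep a * \sum_b1 \sum_b2 de b b1 b2 * \sum_p si b1 p * \sum_al mu p al q *
   (\sum_be u be * mu be b2 al)).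
  sring.
setoid_rewrite (h_unl hA); setoid_rewrite sum_delta_r.
by rewrite (h_Sl hA) mulrA.
Qed.

Lemma MR c q : conv d2 mu M Rr c q = cE e2 u c q.
Proof.
case: c => a b; rewrite /conv /cE /d2 /e2 /Rr /M /=.
rewrite sum_pair; under eq_bigr => ? _ do under eq_bigr => ? _ do rewrite sum_pair; simpl.
transitivity (\sum_al \sum_k (\sum_i \sum_j \sum_k' \sum_l de a i j * de b k' l * mu i k' al * mu j l k)
   * \sum_be si k be * mu al be q).
  sout; salign [:: 4;5;0;1;0;0;0]%N; ring.
setoid_rewrite <- (h_comulm hA).
transitivity (\sum_w mu a b w * \sum_al \sum_k de w al k * \sum_be si k be * mu al be q).
  sout; salign [:: 2;0;0;0]%N; ring.
setoid_rewrite (h_Sr hA).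
under eq_bigr do rewrite mulrA.
by rewrite -big_distrl /= (h_counm hA).
Qed.

Lemma antimul a b q : \sum_k mu a b k * si k q = \sum_p \sum_r si b p * si a r * mu p r q.
Proof.
symmetry.
have := @inv_unique R _ _ d2 e2 mu u _ _ _ (h_assoc hA) (h_unl hA) (h_unr hA) L M Rr LM MR (a, b) q.
apply.
- move=> [c1 c2] [x1 x2] [y1 y2] [z1 z2]; rewrite /d2 /= !sum_pair /=.
  transitivity ((\sum_k1 de c1 k1 z1 * de k1 x1 y1) * (\sum_k2 de c2 k2 z2 * de k2 x2 y2)); first by sring.
  rewrite !(h_coass hA); sring.
- move=> [c1 c2] [y1 y2]; rewrite /d2 /e2 /= sum_pair /=.
  transitivity ((\sum_x1 de c1 x1 y1 * ep x1) * (\sum_x2 de c2 x2 y2 * ep x2)); first by sring.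
  by rewrite !(h_counl hA) xpair_eqE; case: (c1 == y1); case: (c2 == y2); rewrite ?mulr0 ?mulr1.
- move=> [c1 c2] [y1 y2]; rewrite /d2 /e2 /= sum_pair /=.
  transitivity ((\sum_x1 de c1 y1 x1 * ep x1) * (\sum_x2 de c2 y2 x2 * ep x2)); first by sring.
  by rewrite !(h_counr hA) xpair_eqE; case: (c1 == y1); case: (c2 == y2); rewrite ?mulr0 ?mulr1.
Qed.

End D2.
From HB Require Import structures.
From mathcomp Require Import all_boot all_order all_algebra.
From mathcomp Require Import ring.
From Stdlib Require Import Setoid Morphisms.
Set Implicit Arguments. Unset Strict Implicit. Unset Printing Implicit Defensive.
Import GRing.Theory.
Local Open Scope ring_scope.

Section More.
Variables (R : comPzRingType) (n : nat) (mu : 'I_n -> 'I_n -> 'I_n -> R)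
  (u : 'I_n -> R) (de : 'I_n -> 'I_n -> 'I_n -> R) (ep : 'I_n -> R)
  (si : 'I_n -> 'I_n -> R).
Hypothesis hA : HopfAx mu u de ep si.

Lemma anticomul a b q : \sum_k de k a b * si q k = \sum_p \sum_r si p b * si r a * de q p r.
Proof. exact: (antimul (HopfAx_dual hA)). Qed.

Lemma S1 p : \sum_i si i p * u i = u p.
Proof. exact: (epS (HopfAx_dual hA)). Qed.

Lemma act_assoc c s t r :
  \sum_a (\sum_b de c a b * si b s) * (\sum_b de a r b * si b t)
  = \sum_q de q s t * \sum_b de c r b * si b q.
Proof.
transitivity (\sum_b \sum_b' (\sum_a de c a b * de a r b') * si b s * si b' t); first by sring.
setoid_rewrite (h_coass hA).
transitivity (\sum_k de c r k * (\sum_b' \sum_b si b' t * si b s * de k b' b)); first by sring.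
setoid_rewrite <- anticomul; sring.
Qed.

Lemma compat x t z q :
  \sum_a (\sum_b de x a b * si b t) * mu z a q =
  \sum_z1 \sum_z2 de z z1 z2 * \sum_w mu z1 x w * \sum_t' mu t' z2 t * (\sum_b de w q b * si b t').
Proof.
symmetry.
transitivity (\sum_z1 \sum_z2 \sum_t' \sum_b de z z1 z2 * mu t' z2 t * si b t' *
   (\sum_w mu z1 x w * de w q b)).
  sout; salign [:: 0;0;1;1;0]%N; ring.
setoid_rewrite (h_comulm hA).
transitivity (\sum_z1 \sum_z2 \sum_t' \sum_i \sum_j \sum_k \sum_l
  de z z1 z2 * de z1 i j * de x k l * mu i k q * mu t' z2 t * (\sum_b mu j l b * si b t')).
  sout; salign [:: 0;0;0;1;1;1;1;0]%N; ring.
setoid_rewrite (antimul hA).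
transitivity (\sum_z1 \sum_z2 \sum_i \sum_j \sum_k \sum_l \sum_p \sum_r
  de z z1 z2 * de z1 i j * de x k l * mu i k q * si l p * si j r * (\sum_t' mu p r t' * mu t' z2 t)).
  sout; salign [:: 0;0;1;1;1;1;1;1;0]%N; ring.
setoid_rewrite (h_assoc hA).
transitivity (\sum_z2 \sum_i \sum_j \sum_k \sum_l \sum_p \sum_r \sum_t'
  (\sum_z1 de z z1 z2 * de z1 i j) * de x k l * mu i k q * si l p * si j r * mu r z2 t' * mu p t' t).
  sout; salign [:: 1;1;1;1;1;1;1;1;0]%N; ring.
setoid_rewrite (h_coass hA).
transitivity (\sum_i \sum_k \sum_l \sum_p \sum_t' de x k l * mu i k q * si l p * mu p t' t *
  \sum_v de z i v * (\sum_j \sum_z2 de v j z2 * \sum_r si j r * mu r z2 t')).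
  sout; salign [:: 1;2;2;2;3;3;1;0;0]%N; ring.
setoid_rewrite (h_Sl hA).
transitivity (\sum_k \sum_l de x k l * (\sum_i (\sum_v de z i v * ep v) * mu i k q) *
   (\sum_p (\sum_t' u t' * mu p t' t) * si l p)).
  sout; salign [:: 1;1;1;1;0;0]%N; ring.
setoid_rewrite (h_counr hA); setoid_rewrite (h_unr hA).
setoid_rewrite sum_delta; setoid_rewrite sum_delta'.
sring.
Qed.

Lemma P_integral j z q :
  \sum_a (\sum_i \sum_x \sum_y mu i j x * si y i * \sum_b de x a b * si b y) * mu z a q =
  ep z * (\sum_i \sum_x \sum_y mu i j x * si y i * \sum_b de x q b * si b y).
Proof.
transitivity (\sum_i \sum_x \sum_y mu i j x * si y i * (\sum_a (\sum_b de x a b * si b y) * mu z a q)).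
  sout; salign [:: 1;1;1;0;0]%N; ring.
setoid_rewrite compat.
transitivity (\sum_i \sum_y \sum_z1 \sum_z2 \sum_w \sum_t' mu t' z2 y * si y i * de z z1 z2 *
   (\sum_b de w q b * si b t') * (\sum_x mu i j x * mu z1 x w)).
  sout; salign [:: 0;1;1;1;1;1;0;0]%N; ring.
setoid_rewrite <- (h_assoc hA).
transitivity (\sum_z1 \sum_z2 \sum_w \sum_t' \sum_p de z z1 z2 * mu p j w * (\sum_b de w q b * si b t') *
   \sum_i mu z1 i p * (\sum_y mu t' z2 y * si y i)).
  sout; salign [:: 2;2;2;2;2;0;1;0]%N; ring.
setoid_rewrite (antimul hA).
transitivity (\sum_z1 \sum_z2 \sum_w \sum_t' \sum_p \sum_p' \sum_r' de z z1 z2 * mu p j w *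
   (\sum_b de w q b * si b t') * si z2 p' * si t' r' * (\sum_i mu p' r' i * mu z1 i p)).
  sout; salign [:: 0;0;0;0;0;2;2;0;0]%N; ring.
setoid_rewrite <- (h_assoc hA).
transitivity (\sum_w \sum_t' \sum_p \sum_r' \sum_i mu p j w * (\sum_b de w q b * si b t') * si t' r' *
   mu i r' p * (\sum_z1 \sum_z2 de z z1 z2 * \sum_p' si z2 p' * mu z1 p' i)).
  sout; salign [:: 2;2;2;3;3;0;0;1;0]%N; ring.
setoid_rewrite (h_Sr hA).
transitivity (ep z * \sum_w \sum_t' \sum_p \sum_r' mu p j w * (\sum_b de w q b * si b t') * si t' r' *
   (\sum_i u i * mu i r' p)).
  sout; salign [:: 0;0;0;0;0;0]%N; ring.
setoid_rewrite (h_unl hA); setoid_rewrite sum_delta_r'.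
congr (_ * _). sout; salign [:: 2;0;0;0]%N; ring.
Qed.
End More.
From HB Require Import structures.
From mathcomp Require Import all_boot all_order all_algebra.
From mathcomp Require Import ring.
From Stdlib Require Import Setoid Morphisms.
Set Implicit Arguments. Unset Strict Implicit. Unset Printing Implicit Defensive.
Import GRing.Theory.
Local Open Scope ring_scope.

Section More2.
Variables (R : comPzRingType) (n : nat) (mu : 'I_n -> 'I_n -> 'I_n -> R)
  (u : 'I_n -> R) (de : 'I_n -> 'I_n -> 'I_n -> R) (ep : 'I_n -> R)
  (si : 'I_n -> 'I_n -> R).
Hypothesis hA : HopfAx mu u de ep si.

Lemma alpha_ep a j : \sum_r (\sum_b de a r b * si b j) * ep r = si a j.
Proof.
transitivity (\sum_b (\sum_r de a r b * ep r) * si b j); first by sring.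
setoid_rewrite (h_counl hA); exact: sum_delta.
Qed.

Lemma trace1 :
  \sum_j \sum_a (\sum_i \sum_x \sum_y mu i j x * si y i * \sum_b de x a b * si b y) * si a j = 1.
Proof.
transitivity (\sum_j \sum_a (\sum_i \sum_x \sum_y mu i j x * si y i * \sum_b de x a b * si b y) *
   \sum_r (\sum_b de a r b * si b j) * ep r).
  by setoid_rewrite alpha_ep.
transitivity (\sum_j \sum_i \sum_x \sum_y \sum_r mu i j x * si y i * ep r *
   (\sum_a (\sum_b de x a b * si b y) * (\sum_b de a r b * si b j))).
  sout; salign [:: 0;1;1;1;1;0;1;0]%N; ring.
setoid_rewrite (act_assoc hA).
transitivity (\sum_x \sum_q \sum_r (\sum_b de x r b * si b q) * ep r *
   (\sum_i \sum_j de q i j * \sum_p si i p * mu p j x)).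
  sout; salign [:: 2;4;3;3;2;0;0]%N; ring.
setoid_rewrite (h_Sl hA).
transitivity (\sum_x u x * \sum_q ep q * (\sum_r (\sum_b de x r b * si b q) * ep r)); first by sring.
setoid_rewrite alpha_ep.
transitivity (\sum_x u x * \sum_q si x q * ep q); first by sring.
setoid_rewrite (epS hA); rewrite -(h_coun1 hA); sring.
Qed.

Lemma I1 (L : 'I_n -> R) (hL : forall y c, \sum_z L z * mu y z c = ep y * L c) x k i :
  \sum_j \sum_p (\sum_a L a * de a k j) * si j p * mu p x i =
  \sum_i' \sum_j mu x i' k * (\sum_a L a * de a i' j) * si j i.
Proof.
transitivity (\sum_x2 \sum_j \sum_p (\sum_x1 de x x1 x2 * ep x1) * (\sum_a L a * de a k j) * si j p * mu p x2 i).
  setoid_rewrite (h_counl hA).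
  transitivity (\sum_x2 (x == x2)%:R * \sum_j \sum_p (\sum_a L a * de a k j) * si j p * mu p x2 i).
    by rewrite sum_delta.
  by sring.
transitivity (\sum_x1 \sum_x2 \sum_j \sum_p de x x1 x2 * si j p * mu p x2 i * (\sum_a (ep x1 * L a) * de a k j)).
  sout; salign [:: 3;0;0;0;0]%N; ring.
setoid_rewrite <- hL.
transitivity (\sum_x1 \sum_x2 \sum_j \sum_p \sum_z de x x1 x2 * si j p * mu p x2 i * L z * (\sum_a mu x1 z a * de a k j)).
  sout; salign [:: 0;0;0;0;1;0]%N; ring.
setoid_rewrite (h_comulm hA).
transitivity (\sum_x1 \sum_x2 \sum_p \sum_z \sum_i1 \sum_j1 \sum_k1 \sum_l1 de x x1 x2 * mu p x2 i * L z *
   de x1 i1 j1 * de z k1 l1 * mu i1 k1 k * (\sum_j mu j1 l1 j * si j p)).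
  sout; salign [:: 0;0;1;1;1;1;1;1;0]%N; ring.
setoid_rewrite (antimul hA).
transitivity (\sum_x1 \sum_x2 \sum_z \sum_i1 \sum_j1 \sum_k1 \sum_l1 \sum_p' \sum_r'
   de x x1 x2 * L z * de x1 i1 j1 * de z k1 l1 * mu i1 k1 k * si l1 p' * si j1 r' *
   (\sum_p mu p' r' p * mu p x2 i)).
  sout; salign [:: 0;0;1;1;1;1;1;1;1;0]%N; ring.
setoid_rewrite (h_assoc hA).
transitivity (\sum_x2 \sum_z \sum_i1 \sum_j1 \sum_k1 \sum_l1 \sum_p' \sum_r' \sum_p
   (\sum_x1 de x x1 x2 * de x1 i1 j1) * L z * de z k1 l1 * mu i1 k1 k * si l1 p' * si j1 r' *
   mu r' x2 p * mu p' p i).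
  sout; salign [:: 1;1;1;1;1;1;1;1;1;0]%N; ring.
setoid_rewrite (h_coass hA).
transitivity (\sum_z \sum_i1 \sum_k1 \sum_l1 \sum_p' \sum_p L z * de z k1 l1 * mu i1 k1 k * si l1 p' *
   mu p' p i * \sum_v de x i1 v * (\sum_j1 \sum_x2 de v j1 x2 * \sum_r' si j1 r' * mu r' x2 p)).
  sout; salign [:: 1;1;2;2;2;3;3;1;0;0]%N; ring.
setoid_rewrite (h_Sl hA).
transitivity (\sum_z \sum_k1 \sum_l1 L z * de z k1 l1 * (\sum_i1 (\sum_v de x i1 v * ep v) * mu i1 k1 k) *
   (\sum_p' si l1 p' * (\sum_p u p * mu p' p i))).
  sout; salign [:: 0;1;1;1;0;0;0]%N; ring.
setoid_rewrite (h_counr hA); setoid_rewrite (h_unr hA).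
setoid_rewrite sum_delta; setoid_rewrite sum_delta_r'.
sout; salign [:: 1;1;0]%N; ring.
Qed.
End More2.
From HB Require Import structures.
From mathcomp Require Import all_boot all_order all_algebra.
From mathcomp Require Import ring.
From Stdlib Require Import Setoid Morphisms.
Set Implicit Arguments. Unset Strict Implicit. Unset Printing Implicit Defensive.
Import GRing.Theory.
Local Open Scope ring_scope.

Section More3.
Variables (R : comPzRingType) (n : nat) (mu : 'I_n -> 'I_n -> 'I_n -> R)
  (u : 'I_n -> R) (de : 'I_n -> 'I_n -> 'I_n -> R) (ep : 'I_n -> R)
  (si : 'I_n -> 'I_n -> R).
Hypothesis hA : HopfAx mu u de ep si.

Lemma I2 t k v q :
  \sum_k' \sum_a \sum_b de t a b * mu a k' k * (\sum_i (\sum_p si p k' * de i p v) * mu q b i)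
  = \sum_j mu j t v * \sum_p si p k * de q p j.
Proof.
transitivity (\sum_a \sum_b \sum_k' \sum_p de t a b * mu a k' k * si p k' * (\sum_i mu q b i * de i p v)).
  by sring.
setoid_rewrite (h_comulm hA).
transitivity (\sum_a \sum_k' \sum_q1 \sum_q2 \sum_b1 \sum_b2 de q q1 q2 * mu a k' k * mu q2 b2 v *
   (\sum_b de t a b * de b b1 b2) * (\sum_p mu q1 b1 p * si p k')).
  sout; salign [:: 0;1;2;2;2;2;1;0]%N; ring.
setoid_rewrite <- (h_coass hA); setoid_rewrite (antimul hA).
transitivity (\sum_a \sum_q1 \sum_q2 \sum_b1 \sum_b2 \sum_w \sum_p' \sum_r' de q q1 q2 * mu q2 b2 v *
   de t w b2 * de w a b1 * si b1 p' * si q1 r' * (\sum_k' mu p' r' k' * mu a k' k)).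
  sout; salign [:: 0;1;1;1;1;3;1;1;0]%N; ring.
setoid_rewrite <- (h_assoc hA).
transitivity (\sum_q1 \sum_q2 \sum_b2 \sum_w \sum_r' \sum_p de q q1 q2 * mu q2 b2 v * de t w b2 *
   si q1 r' * mu p r' k * (\sum_a \sum_b1 de w a b1 * \sum_p' si b1 p' * mu a p' p)).
  sout; salign [:: 1;1;2;2;3;3;0;0;0]%N; ring.
setoid_rewrite (h_Sr hA).
transitivity (\sum_q1 \sum_q2 \sum_b2 \sum_r' de q q1 q2 * mu q2 b2 v * si q1 r' *
   (\sum_w de t w b2 * ep w) * (\sum_p u p * mu p r' k)).
  sout; salign [:: 0;0;0;1;1;0]%N; ring.
setoid_rewrite (h_counl hA); setoid_rewrite (h_unl hA).
transitivity (\sum_q1 \sum_q2 de q q1 q2 * (\sum_b2 (t == b2)%:R * mu q2 b2 v) *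
   (\sum_r' (r' == k)%:R * si q1 r')); first by sring.
rewrite (eq_bigr (fun q1 => \sum_q2 de q q1 q2 * mu q2 t v * si q1 k)); last first.
  by move=> q1 _; apply: eq_bigr => q2 _; rewrite sum_delta sum_delta'.
sring.
Qed.
End More3.
From HB Require Import structures.
From mathcomp Require Import all_boot all_order all_algebra.
From mathcomp Require classical_sets boolp.
Set Implicit Arguments. Unset Strict Implicit. Unset Printing Implicit Defensive.
Import GRing.Theory.
Local Open Scope ring_scope.

Definition linF (R : pzRingType) (V W : lmodType R) (phi : V -> W) :=
  forall c x y, phi (c *: x + y) = c *: phi x + phi y.

Section LinF.
Variables (R : pzRingType) (V W : lmodType R) (phi : V -> W) (hp : linF phi).
Lemma linF0 : phi 0 = 0.
Proof. have h := hp 1 0 0; rewrite scaler0 addr0 scale1r in h. by apply: (addrI (phi 0)); rewrite addr0 -h. Qed.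
Lemma linFZ c x : phi (c *: x) = c *: phi x.
Proof. by rewrite -[c *: x]addr0 hp linF0 addr0. Qed.
Lemma linFD x y : phi (x + y) = phi x + phi y.
Proof. by have := hp 1 x y; rewrite !scale1r. Qed.
Lemma linFN x : phi (- x) = - phi x.
Proof. by rewrite -scaleN1r linFZ scaleN1r. Qed.
Lemma linF_sum (I : finType) (F : I -> V) : phi (\sum_i F i) = \sum_i phi (F i).
Proof.
apply: (big_rec2 (fun a b => phi a = b)); first exact: linF0.
by move=> j a b _ <-; rewrite linFD.
Qed.
End LinF.

Section LinExt.
Variables (R : comUnitRingType) (hF : forall x : R, x != 0 -> x \is a GRing.unit).
Variables (N P M : lmodType R) (i : N -> P) (f : N -> M).
Hypotheses (hi : linF i) (hinj : injective i) (hf : linF f).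

Let good (G : P * M -> Prop) :=
  [/\ (forall p m m', G (p, m) -> G (p, m') -> m = m'),
      (forall c p m p' m', G (p, m) -> G (p', m') -> G (c *: p + p', c *: m + m')) &
      (forall x, G (i x, f x))].
Let Pg (G : P * M -> Prop) := (forall t, ~ G t) \/ good G.

Lemma lin_ext : exists r : P -> M, linF r /\ forall x, r (i x) = f x.
Proof.
have [A [PA Amax]] : exists A, Pg A /\ forall B, classical_sets.proper A B -> ~ Pg B.
  apply: classical_sets.Zorn_bigcup => F FP Ftot.
  case: (boolp.pselect (exists G, F G /\ exists t, G t)) => [[G0 [FG0 [t0 G0t0]]]|nE]; last first.
    left=> t [G FG Gt]; apply: nE; by exists G; split; last exists t.
  have goodF G t : F G -> G t -> good G.
    by move=> FG Gt; case: (FP G FG) => // /(_ t).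
  have both t1 t2 : classical_sets.bigcup F id t1 -> classical_sets.bigcup F id t2 ->
      exists G, [/\ F G, good G, G t1 & G t2].
    move=> [G1 FG1 G1t] [G2 FG2 G2t].
    case: (Ftot G1 G2 FG1 FG2) => sub.
      by exists G2; split => //; [exact: (goodF G2 t2) | exact: sub].
    by exists G1; split => //; [exact: (goodF G1 t1) | exact: sub].
  right; split.
  - move=> p m m' h1 h2; have [G [_ [fG _ _] G1 G2]] := both _ _ h1 h2; exact: fG G1 G2.
  - move=> c p m p' m' h1 h2; have [G [FG [_ cG _] G1 G2]] := both _ _ h1 h2.
    by exists G => //; exact: cG.
  - move=> x; exists G0 => //; by case: (goodF G0 t0).
have gA : good A.
  case: PA => // emp; exfalso.
  apply: (Amax (fun t => exists x, t = (i x, f x))).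
    split; first by move=> t /emp.
    by move=> /(_ (i 0, f 0) (ex_intro _ 0 erefl)) /emp.
  right; split.
  - by move=> p m m' [x [-> ->]] [x' [/hinj <- ->]].
  - move=> c p m p' m' [x [-> ->]] [x' [-> ->]]; exists (c *: x + x'); by rewrite hi hf.
  - by move=> x; exists x.
case: gA => fA cA bA.
have i0 : i 0 = 0 by exact: linF0.
have f0 : f 0 = 0 by exact: linF0.
have A00 : A (0, 0) by rewrite -{1}i0 -f0.
have tot p : exists m, A (p, m).
  case: (boolp.pselect (exists m, A (p, m))) => // nA; exfalso.
  pose B := fun t : P * M => exists q m c, A (q, m) /\ t = (q + c *: p, m).
  apply: (Amax B).
    split.
      by move=> [q m] Aqm; exists q, m, 0; split => //; rewrite scale0r addr0.
    move=> /(_ (p, 0)) h; apply: nA; exists 0; apply: h.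
    by exists 0, 0, 1; split => //; rewrite add0r scale1r.
  right; split.
  - move=> p1 m m' [q [m1 [c [Aq [-> ->]]]]] [q' [m2 [c' [Aq' [e ->]]]]].
    case: (eqVneq c c') => [ecc|ncc].
      by move: e; rewrite ecc => /addIr eq; move: Aq; rewrite eq => Aq; exact: fA Aq Aq'.
    exfalso; apply: nA.
    have dU : (c - c') \is a GRing.unit by apply: hF; rewrite subr_eq0.
    have Aqq := cA (-1) _ _ _ _ Aq Aq'.
    have := cA ((c - c')^-1) _ _ _ _ Aqq A00; rewrite !addr0 => h.
    eexists; move: h; congr (A (_, _)).
    have -> : -1 *: q + q' = (c - c') *: p.
      by rewrite scaleN1r; apply: (addrI q); rewrite addrA subrr add0r scalerBl addrA e addrK.
    by rewrite scalerA mulVr // scale1r.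
  - move=> d p1 m p1' m' [q [m1 [c [Aq [-> ->]]]]] [q' [m2 [c' [Aq' [-> ->]]]]].
    exists (d *: q + q'), (d *: m1 + m2), (d * c + c'); split; first exact: cA.
    congr (_, _); rewrite scalerDr scalerDl scalerA.
    by rewrite -!addrA; congr (_ + _); rewrite addrC -addrA; congr (_ + _); rewrite addrC.
  - by move=> x; exists (i x), (f x), 0; split => //; rewrite scale0r addr0.
pose r p := proj1_sig (boolp.constructive_indefinite_description (tot p)).
have Ar p : A (p, r p) by rewrite /r; case: boolp.constructive_indefinite_description.
exists r; split.
  by move=> c x y; apply: (fA _ _ _ (Ar _)); apply: cA; apply: Ar.
by move=> x; apply: (fA _ _ _ (Ar _)).
Qed.
End LinExt.
From HB Require Import structures.
From mathcomp Require Import all_boot all_order all_algebra.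
From mathcomp Require Import ring.
From Stdlib Require Import Setoid Morphisms.
Set Implicit Arguments. Unset Strict Implicit. Unset Printing Implicit Defensive.
Import GRing.Theory.
Local Open Scope ring_scope.

Section Bridge.
Variables (R : comUnitRingType) (n : nat) (H : hopf_consts R n).

Lemma AbasisE (i j : 'I_n) : Abasis R i 0 j = (i == j)%:R.
Proof. by rewrite /Abasis mxE eqxx /= eq_sym. Qed.

Lemma AmulE (a b : 'rV[R]_n) k : Amul H a b 0 k = \sum_i \sum_j a 0 i * b 0 j * hmul H i j k.
Proof. by rewrite mxE. Qed.

Lemma Amul_el i (y : 'rV[R]_n) k : Amul H (Abasis R i) y 0 k = \sum_j y 0 j * hmul H i j k.
Proof.
rewrite AmulE; setoid_rewrite AbasisE.
transitivity (\sum_i' (i == i')%:R * \sum_j y 0 j * hmul H i' j k); first by sring.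
by rewrite sum_delta.
Qed.

Lemma Amul_er (x : 'rV[R]_n) j k : Amul H x (Abasis R j) 0 k = \sum_i x 0 i * hmul H i j k.
Proof.
rewrite AmulE; setoid_rewrite AbasisE.
transitivity (\sum_i x 0 i * \sum_j' (j == j')%:R * hmul H i j' k); first by sring.
by setoid_rewrite sum_delta.
Qed.

Lemma AcomulE (a : 'rV[R]_n) i j : Acomul H a i j = \sum_k a 0 k * hcomul H k i j.
Proof. by rewrite mxE. Qed.

Lemma Acomul_e c i j : Acomul H (Abasis R c) i j = hcomul H c i j.
Proof. rewrite AcomulE; setoid_rewrite AbasisE; exact: sum_delta. Qed.

Lemma Acounit_e c : Acounit H (Abasis R c) = hcounit H c.
Proof. rewrite /Acounit; setoid_rewrite AbasisE; exact: sum_delta. Qed.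

Lemma AantiE (a : 'rV[R]_n) j : Aanti H a 0 j = \sum_i a 0 i * hanti H i j.
Proof. by rewrite mxE. Qed.

Lemma Aanti_e i j : Aanti H (Abasis R i) 0 j = hanti H i j.
Proof. rewrite AantiE; setoid_rewrite AbasisE; exact: sum_delta. Qed.

Lemma tmulE (M N : 'M[R]_n) p q : tmul H M N p q = \sum_i \sum_j \sum_k \sum_l
     M i j * N k l * hmul H i k p * hmul H j l q.
Proof. by rewrite mxE. Qed.

Lemma scaleE (c : R) (M : 'rV[R]_n) q : (c *: M) 0 q = c * M 0 q.
Proof. by rewrite mxE. Qed.

Lemma AoneE k : Aone H 0 k = hunit H k.
Proof. by rewrite mxE. Qed.

Lemma hopfAx : is_hopf H -> HopfAx (hmul H) (hunit H) (hcomul H) (hcounit H) (hanti H).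
Proof.
case=> [[asc un] coa coun [cm c1 em e1] ant]; split.
- move=> i j k q; have := congr1 (fun M : 'rV[R]_n => M 0 q) (asc (Abasis R i) (Abasis R j) (Abasis R k)).
  rewrite /= Amul_er; repeat setoid_rewrite Amul_el; repeat setoid_rewrite AbasisE.
  by repeat setoid_rewrite sum_delta.
- move=> j k; have := congr1 (fun M : 'rV[R]_n => M 0 k) (proj1 (un (Abasis R j))).
  rewrite /= Amul_er AbasisE; by repeat setoid_rewrite AoneE.
- move=> i k; have := congr1 (fun M : 'rV[R]_n => M 0 k) (proj2 (un (Abasis R i))).
  rewrite /= Amul_el AbasisE; by repeat setoid_rewrite AoneE.
- move=> c x y z; have := coa (Abasis R c) x y z; by repeat setoid_rewrite Acomul_e.
- move=> c y; have := congr1 (fun M : 'rV[R]_n => M 0 y) (proj1 (coun (Abasis R c))).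
  rewrite AbasisE mxE; by repeat setoid_rewrite Acomul_e.
- move=> c x; have := congr1 (fun M : 'rV[R]_n => M 0 x) (proj2 (coun (Abasis R c))).
  rewrite AbasisE mxE; by repeat setoid_rewrite Acomul_e.
- move=> a b p q; have := congr1 (fun M : 'M[R]_n => M p q) (cm (Abasis R a) (Abasis R b)).
  rewrite /= tmulE AcomulE; repeat setoid_rewrite Acomul_e; repeat setoid_rewrite Amul_el;
  repeat setoid_rewrite AbasisE; by repeat setoid_rewrite sum_delta.
- move=> i j; have := congr1 (fun M : 'M[R]_n => M i j) c1; rewrite !mxE; by repeat setoid_rewrite AoneE.
- move=> a b; have := em (Abasis R a) (Abasis R b); rewrite !Acounit_e /Acounit.
  repeat setoid_rewrite Amul_el; repeat setoid_rewrite AbasisE; by repeat setoid_rewrite sum_delta.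
- by move: e1; rewrite /Acounit; repeat setoid_rewrite AoneE.
- move=> a q; have := congr1 (fun M : 'rV[R]_n => M 0 q) (proj1 (ant (Abasis R a))).
  rewrite Acounit_e scaleE AoneE summxE; repeat setoid_rewrite summxE; repeat setoid_rewrite scaleE.
  repeat setoid_rewrite Acomul_e; repeat setoid_rewrite Amul_er; by repeat setoid_rewrite Aanti_e.
- move=> a q; have := congr1 (fun M : 'rV[R]_n => M 0 q) (proj2 (ant (Abasis R a))).
  rewrite Acounit_e scaleE AoneE summxE; repeat setoid_rewrite summxE; repeat setoid_rewrite scaleE.
  repeat setoid_rewrite Acomul_e; repeat setoid_rewrite Amul_el; by repeat setoid_rewrite Aanti_e.
Qed.
End Bridge.
From HB Require Import structures.
From mathcomp Require Import all_boot all_order all_algebra.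
From mathcomp Require Import ring.
From Stdlib Require Import Setoid Morphisms.
Set Implicit Arguments. Unset Strict Implicit. Unset Printing Implicit Defensive.
Import GRing.Theory.
Local Open Scope ring_scope.

Section Part1.
Variables (R : comUnitRingType) (n m : nat) (H : hopf_consts R n) (S : modalg_consts R n m).
Hypothesis hH : is_hopf H.
Let hA := hopfAx hH.

Lemma AactE (a : 'rV[R]_n) (s : 'rV[R]_m) k :
  Aact S a s 0 k = \sum_i \sum_j a 0 i * s 0 j * sact S i j k.
Proof. by rewrite mxE. Qed.

Lemma Aact_linl (s : 'rV[R]_m) : linF (fun a => Aact S a s).
Proof.
move=> c a b; apply/rowP => k; rewrite !mxE big_distrr -big_split /=; apply: eq_bigr => i _.
rewrite big_distrr -big_split /=; apply: eq_bigr => j _; rewrite !mxE; ring.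
Qed.

Lemma Aact_linr (a : 'rV[R]_n) : linF (fun s => Aact S a s).
Proof.
move=> c s t; apply/rowP => k; rewrite !mxE big_distrr -big_split /=; apply: eq_bigr => i _.
rewrite big_distrr -big_split /=; apply: eq_bigr => j _; rewrite !mxE; ring.
Qed.

Lemma integralP (l : 'rV[R]_n) :
  left_integral H l <-> forall y c, \sum_z l 0 z * hmul H y z c = hcounit H y * l 0 c.
Proof.
split.
  move=> hl y c; have := congr1 (fun M : 'rV[R]_n => M 0 c) (hl (Abasis R y)).
  by rewrite /= Amul_el scaleE Acounit_e.
move=> hl a; apply/rowP => c; rewrite scaleE AmulE /Acounit.
transitivity (\sum_i a 0 i * \sum_j l 0 j * hmul H i j c); first by sring.
setoid_rewrite hl; sring.
Qed.

Lemma dual_actE (a f : 'rV[R]_n) p :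
  dual_act H a f 0 p = \sum_i f 0 i * \sum_x a 0 x * hmul H p x i.
Proof. rewrite mxE; by setoid_rewrite Amul_el. Qed.


Definition wv (L f : 'rV[R]_n) : 'rV[R]_n :=
  \row_i \sum_j Acomul H L i j * \sum_p hanti H j p * f 0 p.
Lemma wE L f i : wv L f 0 i = \sum_j Acomul H L i j * \sum_p hanti H j p * f 0 p.
Proof. by rewrite mxE. Qed.

Lemma w_dual (L : 'rV[R]_n) (hL : left_integral H L) a f :
  wv L (dual_act H a f) = Amul H a (wv L f).
Proof.
move/integralP: hL => hL.
apply/rowP => k; rewrite wE AmulE; setoid_rewrite wE; setoid_rewrite dual_actE.
setoid_rewrite AcomulE.
transitivity (\sum_x \sum_i a 0 x * f 0 i *
   (\sum_j \sum_p (\sum_a0 L 0 a0 * hcomul H a0 k j) * hanti H j p * hmul H p x i)).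
  sout; salign [:: 4;3;0;1;0]%N; ring.
setoid_rewrite (I1 hA (L := fun z => L 0 z) hL).
sout; salign [:: 0;1;1;1;0]%N; ring.
Qed.

Lemma dual_oneE p : dual_one H 0 p = hcounit H p.
Proof. by rewrite mxE. Qed.

Lemma w_one (L : 'rV[R]_n) : wv L (dual_one H) = L.
Proof.
apply/rowP => i; rewrite wE; setoid_rewrite dual_oneE.
setoid_rewrite (epS hA); setoid_rewrite AcomulE.
transitivity (\sum_a L 0 a * \sum_j hcomul H a i j * hcounit H j); first by sring.
by setoid_rewrite (h_counr hA); rewrite sum_delta_r'.
Qed.
End Part1.
From HB Require Import structures.
From mathcomp Require Import all_boot all_order all_algebra.
From mathcomp Require Import ring.
From Stdlib Require Import Setoid Morphisms.
Set Implicit Arguments. Unset Strict Implicit. Unset Printing Implicit Defensive.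
Import GRing.Theory.
Local Open Scope ring_scope.

Section Part1b.
Variables (R : comUnitRingType) (n m : nat) (H : hopf_consts R n) (S : modalg_consts R n m).
Hypothesis hH : is_hopf H.
Hypothesis hS : is_module_algebra H S.
Let hA := hopfAx hH.

Lemma fwd : IS_eq_R H S -> exists g, dual_module_hom H S g /\ g (dual_one H) = Sone S.
Proof.
move=> hIS.
have [k [l [s [hl hsum]]]] : exists k (l : 'I_k -> 'rV[R]_n) (s : 'I_k -> 'rV[R]_m),
    (forall i, left_integral H (l i)) /\ Sone S = \sum_(i < k) Aact S (l i) (s i).
  by apply/(hIS (Sone S)); exists 1; rewrite scale1r.
case: hS => _ hmul _ _ _.
exists (fun f => \sum_t Aact S (wv H (l t) f) (s t)); split; first split.
- move=> c f f'.
  have hw t : wv H (l t) (c *: f + f') = c *: wv H (l t) f + wv H (l t) f'.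
    apply/rowP => i; rewrite !mxE.
    have e p : (c *: f + f') 0 p = c * f 0 p + f' 0 p by rewrite !mxE.
    have dr (x y z : R) : x * (y + z) = x * y + x * z by rewrite mulrDr.
    have bs (F G : 'I_n -> R) : \sum_i (F i + G i) = \sum_i F i + \sum_i G i by rewrite big_split.
    setoid_rewrite e; repeat (setoid_rewrite dr || setoid_rewrite bs).
    by congr (_ + _); sring.
  under eq_bigr do rewrite hw (Aact_linl _ _ _ _).
  by rewrite big_split /= scaler_sumr.
- move=> a f; rewrite (linF_sum (Aact_linr S a)).
  apply: eq_bigr => t _; by rewrite -hmul w_dual.
- by rewrite hsum; apply: eq_bigr => t _; rewrite w_one.
Qed.

Definition Lam (j : 'I_n) : 'rV[R]_n := \row_a \sum_i \sum_x \sum_y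
  hmul H i j x * hanti H y i * \sum_b hcomul H x a b * hanti H b y.
Lemma LamE j a : Lam j 0 a = \sum_i \sum_x \sum_y
  hmul H i j x * hanti H y i * \sum_b hcomul H x a b * hanti H b y.
Proof. by rewrite mxE. Qed.
Definition phiv (j : 'I_n) : 'rV[R]_n := \row_a hanti H a j.

Lemma phivE j a : phiv j 0 a = hanti H a j.
Proof. by rewrite mxE. Qed.

Lemma Lam_int j : forall y c, \sum_z Lam j 0 z * hmul H y z c = hcounit H y * Lam j 0 c.
Proof. move=> y c; rewrite LamE; setoid_rewrite LamE; exact: (P_integral hA). Qed.

Lemma sum_dual : \sum_j dual_act H (Lam j) (phiv j) = dual_one H.
Proof.
apply/rowP => p; rewrite summxE dual_oneE; setoid_rewrite dual_actE.
setoid_rewrite Lam_int.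
transitivity (hcounit H p * \sum_j \sum_a Lam j 0 a * phiv j 0 a); first by sring.
setoid_rewrite LamE; setoid_rewrite phivE.
by rewrite (trace1 hA) mulr1.
Qed.

Lemma bwd : invariants_eq_R H S -> forall g, dual_module_hom H S g ->
  g (dual_one H) = Sone S -> IS_eq_R H S.
Proof.
move=> hInv g [glin gact] g1 x; case: hS => _ hmul _ _ _; split.
- case=> k [l [s [hl ->]]]; apply/hInv => a.
  rewrite (linF_sum (Aact_linr S a)) scaler_sumr; apply: eq_bigr => t _.
  by rewrite -hmul hl (linFZ (Aact_linl S _)).
- case=> r ->; exists n, (fun j => r *: Lam j), (fun j => g (phiv j)); split.
  + move=> j; apply/integralP => y c; rewrite scaleE; setoid_rewrite scaleE.
    under eq_bigr do rewrite -mulrA; rewrite -mulr_sumr Lam_int; ring.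
  + under eq_bigr do rewrite (linFZ (Aact_linl S _)) -gact.
    by rewrite -scaler_sumr -(linF_sum glin) sum_dual g1.
Qed.
End Part1b.
From HB Require Import structures.
From mathcomp Require Import all_boot all_order all_algebra.
From mathcomp Require Import ring.
From Stdlib Require Import Setoid Morphisms.
Set Implicit Arguments. Unset Strict Implicit. Unset Printing Implicit Defensive.
Import GRing.Theory.
Local Open Scope ring_scope.

Section Part2.
Variables (R : comUnitRingType) (n m : nat) (H : hopf_consts R n) (S : modalg_consts R n m).
Hypothesis hH : is_hopf H.
Let hA := hopfAx hH.
Hypothesis hF : forall x : R, x != 0 -> x \is a GRing.unit.
Variables (g : 'rV[R]_n -> 'rV[R]_m) (hg : dual_module_hom H S g) (g1 : g (dual_one H) = Sone S).
Variables (M : lmodType R) (sa : M -> 'rV[R]_m -> M) (rho : M -> 'I_n -> M).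
Hypothesis hM : rel_hopf_module H S sa rho.

Definition cvec (k j : 'I_n) : 'rV[R]_n := \row_q \sum_p hanti H p k * hcomul H q p j.

Lemma cvecE k j q : cvec k j 0 q = \sum_p hanti H p k * hcomul H q p j.
Proof. by rewrite mxE. Qed.

Lemma sum_scale (V W : lmodType R) (I : finType) (c : I -> R) (v : I -> V) (phi : V -> W)
  (hp : linF phi) : phi (\sum_i c i *: v i) = \sum_i c i *: phi (v i).
Proof. rewrite (linF_sum hp); apply: eq_bigr => i _; exact: linFZ. Qed.

Lemma cvec_sum t : \sum_j \sum_k hmul H k j t *: cvec k j = hunit H t *: dual_one H.
Proof.
apply/rowP => q; rewrite summxE scaleE dual_oneE; setoid_rewrite summxE.
setoid_rewrite scaleE; setoid_rewrite cvecE.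
rewrite mulrC -(h_Sl hA); sring.
Qed.

Lemma part2 : injective_comodule H rho.
Proof.
move=> N P rhoN rhoP i f [cN1 cN2 cN3] [cP1 cP2 cP3] [ilin icom] inj [flin fcom].
case: hM => [[[cM1 cM2 cM3] saL] saR saA sa1 saH].
case: hg => glin gact.
have [r [rlin rext]] := lin_ext hF ilin inj flin.
have rhoL k : linF (fun x => rho x k) by move=> c x y; exact: cM1.
have saLs s : linF (fun x => sa x s) by move=> c x y; exact: saL.
have Gl x : linF (fun v => sa x (g v)) by move=> c v w; rewrite glin saR.
pose h p := \sum_j \sum_k sa (rho (r (rhoP p j)) k) (g (cvec k j)).
exists h; split; first split.
- move=> c p p'; rewrite /h.
  under eq_bigr => j _ do (under eq_bigr => k _ do rewrite cP1 rlin cM1 saL).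
  rewrite scaler_sumr -big_split /=; apply: eq_bigr => j _; by rewrite scaler_sumr -big_split.
- move=> p t; rewrite /h.
  have saSum (I : finType) (c : I -> R) (v : I -> M) s : sa (\sum_i c i *: v i) s = \sum_i c i *: sa (v i) s.
    exact: (sum_scale c v (saLs s)).
  have rhoSum (I : finType) (c : I -> R) (v : I -> M) k : rho (\sum_i c i *: v i) k = \sum_i c i *: rho (v i) k.
    exact: (sum_scale c v (rhoL k)).
  have rSum (I : finType) (c : I -> R) (v : I -> P) : r (\sum_i c i *: v i) = \sum_i c i *: r (v i).
    exact: (sum_scale c v rlin).
  have GSum (I : finType) (c : I -> R) (v : I -> 'rV[R]_n) x : sa x (g (\sum_i c i *: v i)) = \sum_i c i *: sa x (g (v i)).
    exact: (sum_scale c v (Gl x)).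
  have GS (I : finType) (v : I -> 'rV[R]_n) x : sa x (g (\sum_i v i)) = \sum_i sa x (g (v i)).
    exact: (linF_sum (Gl x)).
  have rhoS (I : finType) (v : I -> M) k : rho (\sum_i v i) k = \sum_i rho (v i) k.
    exact: (linF_sum (rhoL k)).
  transitivity (\sum_j \sum_s sa (rho (r (rhoP p j)) s) (g (\sum_k \sum_a \sum_b
     (hcomul H t a b * hmul H a k s) *: dual_act H (Abasis R b) (cvec k j)))).
    rewrite rhoS; setoid_rewrite rhoS; setoid_rewrite saH; setoid_rewrite cM2; setoid_rewrite <- gact.
    setoid_rewrite saSum; setoid_rewrite scaler_sumr; setoid_rewrite scalerA.
    setoid_rewrite GS; setoid_rewrite GS; setoid_rewrite GSum.
    by salign [:: 0; 3; 0; 0; 0]%N.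
  transitivity (\sum_v \sum_k sa (rho (r (rhoP p v)) k) (g (\sum_j hmul H j t v *: cvec k j))).
    apply: eq_bigr => v _; apply: eq_bigr => k _; congr (sa _ (g _)).
    apply/rowP => q; repeat setoid_rewrite summxE; repeat setoid_rewrite scaleE.
    setoid_rewrite dual_actE; setoid_rewrite AbasisE.
    setoid_rewrite sum_delta; setoid_rewrite cvecE; exact: (I2 hA).
  symmetry; setoid_rewrite cP2; setoid_rewrite rSum; setoid_rewrite rhoSum; setoid_rewrite saSum.
  setoid_rewrite GSum.
  by salign [:: 2; 1; 0]%N.
- move=> x; rewrite /h.
  under eq_bigr => j _ do rewrite icom rext -fcom.
  under eq_bigr => j _ do (under eq_bigr => k _ do rewrite cM2 (sum_scale _ _ (saLs _))).
  sfront 2%N.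
  transitivity (\sum_t sa (rho (f x) t) (g (\sum_j \sum_k hmul H k j t *: cvec k j))).
    apply: eq_bigr => t _; rewrite (linF_sum (Gl _)); apply: eq_bigr => j _.
    symmetry; exact: (sum_scale _ _ (Gl _)).
  under eq_bigr do rewrite cvec_sum (linFZ (Gl _)) g1 sa1.
  exact: cM3.
Qed.
End Part2.
From HB Require Import structures.
From mathcomp Require Import all_boot all_order all_algebra.
Import GRing.Theory.
Local Open Scope ring_scope.

Theorem mainTheorem1 (R : comUnitRingType) (n m : nat)
    (H : hopf_consts R n) (S : modalg_consts R n m) :
  local_ring R -> is_hopf H -> is_module_algebra H S ->
  faithful_action S -> m = n -> invariants_eq_R H S ->
  (tame H S <->
     exists g : 'rV[R]_n -> 'rV[R]_m,
       dual_module_hom H S g /\ g (dual_one H) = Sone S)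
  /\
  ((forall x : R, x != 0 -> x \is a GRing.unit) -> tame H S ->
     forall (M : lmodType R) (sa : M -> 'rV[R]_m -> M) (rho : M -> 'I_n -> M),
       rel_hopf_module H S sa rho -> injective_comodule H rho).
Proof.
move=> _ hH hS hfa hmn hInv.
have iff1 : tame H S <-> exists g : 'rV[R]_n -> 'rV[R]_m,
       dual_module_hom H S g /\ g (dual_one H) = Sone S.
  split.
  - by case=> _ _ _ _ hIS; exact: fwd hH hS hIS.
  - by case=> g [hg g1]; split => //; exact: (bwd hH hS hInv (g := g) hg g1).
split => // hF ht M sa rho hM.
case/iff1: ht => g [hg g1].
exact: (@part2 _ _ _ _ _ hH hF g hg g1 M sa rho hM).
Qed.
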